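(* Let $c>0$, $\theta_k>0$, $T_{\rm TDMA}>0$ and $0<\tau_k^{\max}<T_{\rm TDMA}$ be constants, and let $\varepsilon(\tau)=e^{-c\tau}$. Consider the problem (P6) $$\min_{\tau_k}\ \tau_k-\frac{1}{\theta_k}\log\!\left(1-\varepsilon(\tau_k)e^{\theta_k T_{\rm TDMA}}\right)\quad\text{s.t.}\quad 0\le\tau_k\le\tau_k^{\max}.$$ Then the optimal transmission time is $$\tau_k^{\rm opt}=\min\left(\tau_k^{\max},\ \widetilde\tau_k\right),\qquad\text{where}\qquad \widetilde\tau_k=\frac{1}{c}\log\!\left(1+\frac{c}{\theta_k}\right)+\frac{\theta_k}{c}T_{\rm TDMA}.$$
   Context: Setting: source $k$ in a TDMA system with frame length $T_{\rm TDMA}$ is allocated transmission time $\tau_k$ per frame; a transmission fails with probability $\varepsilon(\tau_k)=e^{-c\tau_k}$, and $\theta_k$ is the AoI exponent. The objective is considered on the set where it is defined, i.e. where $\varepsilon(\tau_k)e^{\theta_k T_{\rm TDMA}}<1$ (the condition for the moment generating function of the peak age to exist). *)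

(* Defs.v *)
From Stdlib Require Import Reals.
Open Scope R_scope.

Definition eps (c tau : R) : R := exp (- c * tau).

Definition obj (c theta T tau : R) : R :=
  tau - (1 / theta) * ln (1 - eps c tau * exp (theta * T)).

(* Feasible set of (P6), restricted to where the objective is defined
   (eps(tau) e^{theta T} < 1). *)
Definition feasible (c theta T taumax tau : R) : Prop :=
  0 <= tau /\ tau <= taumax /\ eps c tau * exp (theta * T) < 1.

Definition tau_tilde (c theta T : R) : R :=
  (1 / c) * ln (1 + c / theta) + (theta / c) * T.

(* Main.v *)
Require Import Defs.
From Stdlib Require Import Reals Lra.
From Coquelicot Require Import Coquelicot.
Open Scope R_scope.

Definition hh (c theta T x : R) : R := exp (- theta * x) - exp (theta * T) * exp (- (theta + c) * x).
Definition dh (c theta T x : R) : R := exp (- theta * x) * (- theta + (theta + c) * exp (theta * T - c * x)).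

Lemma hh_der c theta T x : derivable_pt_lim (hh c theta T) x (dh c theta T x).
Proof.
  apply is_derive_Reals. unfold hh, dh.
  auto_derive; [exact I|].
  replace (theta * T - c * x) with (theta * T + (- c * x)) by ring.
  replace (- (theta + c) * x) with (- theta * x + (- c * x)) by ring.
  rewrite !exp_plus. ring.
Qed.

Lemma tt_eq c theta T : 0 < c -> 0 < theta ->
  exp (theta * T - c * tau_tilde c theta T) = theta / (theta + c).
Proof.
  intros hc ht. unfold tau_tilde.
  replace (theta * T - c * (1 / c * ln (1 + c / theta) + theta / c * T))
    with (- ln (1 + c / theta)) by (field; lra).
  rewrite exp_Ropp, exp_ln.
  - field; lra.
  - assert (0 < c / theta) by (apply Rdiv_lt_0_compat; lra). lra.
Qed.

Lemma dh_pos c theta T x : 0 < c -> 0 < theta -> x < tau_tilde c theta T -> 0 < dh c theta T x.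
Proof.
  intros hc ht hx. unfold dh. apply Rmult_lt_0_compat. apply exp_pos.
  assert (exp (theta * T - c * tau_tilde c theta T) < exp (theta * T - c * x)).
  { apply exp_increasing. nra. }
  rewrite tt_eq in H by lra.
  assert (theta / (theta + c) * (theta + c) = theta) by (field; lra).
  nra.
Qed.

Lemma dh_neg c theta T x : 0 < c -> 0 < theta -> tau_tilde c theta T < x -> dh c theta T x < 0.
Proof.
  intros hc ht hx. unfold dh.
  assert (exp (theta * T - c * x) < exp (theta * T - c * tau_tilde c theta T)).
  { apply exp_increasing. nra. }
  rewrite tt_eq in H by lra.
  assert (theta / (theta + c) * (theta + c) = theta) by (field; lra).
  assert (0 < exp (- theta * x)) by apply exp_pos.
  assert (- theta + (theta + c) * exp (theta * T - c * x) < 0).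
  { assert ((theta + c) * exp (theta * T - c * x) < (theta + c) * (theta / (theta + c))).
    { apply Rmult_lt_compat_l; lra. } lra. }
  assert (0 < exp (- theta * x) * (theta - (theta + c) * exp (theta * T - c * x))) by (apply Rmult_lt_0_compat; lra).
  lra.
Qed.

Lemma hh_inc c theta T a b : 0 < c -> 0 < theta -> a < b -> b <= tau_tilde c theta T ->
  hh c theta T a < hh c theta T b.
Proof.
  intros hc ht hab hb.
  destruct (MVT_cor2 (hh c theta T) (dh c theta T) a b hab) as [z [Hz Hz2]].
  { intros; apply hh_der. }
  assert (0 < dh c theta T z) by (apply dh_pos; lra). nra.
Qed.

Lemma hh_dec c theta T a b : 0 < c -> 0 < theta -> a < b -> tau_tilde c theta T <= a ->
  hh c theta T b < hh c theta T a.
Proof.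
  intros hc ht hab hb.
  destruct (MVT_cor2 (hh c theta T) (dh c theta T) a b hab) as [z [Hz Hz2]].
  { intros; apply hh_der. }
  assert (dh c theta T z < 0) by (apply dh_neg; lra). nra.
Qed.

Lemma hh_fact c theta T x : hh c theta T x = exp (- theta * x) * (1 - eps c x * exp (theta * T)).
Proof.
  unfold hh, eps. replace (- (theta + c) * x) with (- theta * x + (- c * x)) by ring.
  rewrite exp_plus. ring.
Qed.

Lemma obj_eq c theta T x : 0 < theta -> eps c x * exp (theta * T) < 1 ->
  0 < hh c theta T x /\ obj c theta T x = - (1 / theta) * ln (hh c theta T x).
Proof.
  intros ht hf. rewrite hh_fact. split.
  - apply Rmult_lt_0_compat. apply exp_pos. lra.
  - unfold obj. rewrite ln_mult by (try apply exp_pos; lra). rewrite ln_exp.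
    field. lra.
Qed.

Theorem theorem2 (c theta T taumax : R)
  (hc : 0 < c) (htheta : 0 < theta) (hT : 0 < T)
  (htmax0 : 0 < taumax) (htmaxT : taumax < T)
  (hnonempty : eps c taumax * exp (theta * T) < 1) :
  let tauopt := Rmin taumax (tau_tilde c theta T) in
  feasible c theta T taumax tauopt /\
  (forall tau, feasible c theta T taumax tau ->
     obj c theta T tauopt <= obj c theta T tau) /\
  (forall tau, feasible c theta T taumax tau ->
     obj c theta T tau <= obj c theta T tauopt -> tau = tauopt).
Proof.
  intros tauopt.
  set (tt := tau_tilde c theta T).
  assert (ttpos : 0 < tt).
  { unfold tt, tau_tilde.
    assert (0 < c / theta) by (apply Rdiv_lt_0_compat; lra).
    assert (0 < ln (1 + c / theta)) by (rewrite <- ln_1; apply ln_increasing; lra).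
    assert (0 < 1 / c) by (apply Rdiv_lt_0_compat; lra).
    assert (0 < theta / c) by (apply Rdiv_lt_0_compat; lra). nra. }
  assert (feas : feasible c theta T taumax tauopt).
  { unfold tauopt, Rmin. destruct (Rle_dec taumax (tau_tilde c theta T)).
    - repeat split; lra.
    - apply Rnot_le_lt in n. repeat split; try (unfold tt in *; lra).
      unfold eps. rewrite <- exp_plus.
      replace (- c * tau_tilde c theta T + theta * T) with (theta * T - c * tau_tilde c theta T) by ring.
      rewrite tt_eq by lra. apply Rmult_lt_reg_r with (theta + c). lra.
      field_simplify; lra. }
  assert (key : forall tau, feasible c theta T taumax tau ->
            tau = tauopt \/ hh c theta T tau < hh c theta T tauopt).
  { intros tau [h0 [h1 h2]]. unfold tauopt, Rmin.
    destruct (Rle_dec taumax (tau_tilde c theta T)).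
    - destruct (Req_dec tau taumax). left; auto. right. apply hh_inc; lra.
    - apply Rnot_le_lt in n. unfold tt in *. destruct (Rtotal_order tau (tau_tilde c theta T)) as [H|[H|H]].
      + right. apply hh_inc; lra.
      + left; auto.
      + right. apply hh_dec; lra. }
  destruct feas as [f0 [f1 f2]].
  destruct (obj_eq c theta T tauopt htheta f2) as [hp ho].
  assert (hth : 0 < 1 / theta) by (apply Rdiv_lt_0_compat; lra).
  split; [repeat split; auto|split].
  - intros tau Hf. pose proof (key tau Hf) as K.
    destruct Hf as [g0 [g1 g2]].
    destruct (obj_eq c theta T tau htheta g2) as [hp' ho'].
    destruct K as [K|K]. subst tau. lra.
    rewrite ho, ho'. assert (ln (hh c theta T tau) < ln (hh c theta T tauopt)) by (apply ln_increasing; lra).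
    nra.
  - intros tau Hf Hle. pose proof (key tau Hf) as K.
    destruct Hf as [g0 [g1 g2]].
    destruct (obj_eq c theta T tau htheta g2) as [hp' ho'].
    destruct K as [K|K]. auto.
    exfalso. rewrite ho, ho' in Hle.
    assert (ln (hh c theta T tau) < ln (hh c theta T tauopt)) by (apply ln_increasing; lra).
    nra.
Qed.
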